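(* Let $k\ge2$ and let $A\in\mathbf{GL}(n,\mathbb Z)$ satisfy $A\equiv I\bmod 2$ and $A^2\equiv I\bmod 2^{k+1}$. Then there exists $p\in\mathbf{GL}(n,\mathbb Z)$ such that $p^{-1}Ap$ is congruent modulo $2^k$ to a diagonal matrix with diagonal entries $\pm1$. Moreover, if $A=\begin{pmatrix}I_q&0\\ *&*\end{pmatrix}$ (block form with respect to $n=q+(n-q)$), then $p$ may be chosen of the form $\begin{pmatrix}I_q&0\\ *&*\end{pmatrix}$. *)

(* Defs.v *)
From mathcomp Require Import all_boot all_algebra.
Set Implicit Arguments. Unset Strict Implicit. Unset Printing Implicit Defensive.
Import GRing.Theory Num.Theory.
Local Open Scope ring_scope.

Definition mx_congr (m : int) (n1 n2 : nat) (A B : 'M[int]_(n1, n2)) : Prop :=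
  forall i j, (A i j = B i j %[mod m])%Z.

Definition diag_pm1 (n : nat) (D : 'M[int]_n) : Prop :=
  forall i j, D i j = (if i == j then D i i else 0) /\ (D i i = 1 \/ D i i = -1).

Definition lower_block_id (q r : nat) (A : 'M[int]_(q + r)) : Prop :=
  ulsubmx A = 1%:M /\ ursubmx A = 0.

(* Main.v *)
Require Import Defs.
From mathcomp Require Import all_boot all_algebra zify.
Import GRing.Theory Num.Theory.
Set Implicit Arguments. Unset Strict Implicit.
Local Open Scope ring_scope.

Lemma Zp_intr0 (N : nat) (z : int) : (1 < N)%N ->
  ((z%:~R : 'Z_N) == 0) = (N%:Z %| z)%Z.
Proof.
move=> N1.
have N0 : N%:Z != 0 by case: N N1.
rewrite {1}(divz_eq z N) intrD intrM.
have -> : (N%:Z)%:~R = (0 : 'Z_N) by exact: (pchar_Zp N1).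
rewrite mulr0 add0r.
have r0 : 0 <= (z %% N)%Z := modz_ge0 _ N0.
have rN : ((z %% N)%Z < N) by apply: ltz_pmod; rewrite ltz_nat; case: (N) N1.
apply/idP/idP.
- rewrite -(gez0_abs r0) => /eqP H.
  apply/dvdz_mod0P.
  have := congr1 val H.
  change (((`|(z %% N)%Z|%N)%:R : 'Z_N) = (0%N : nat) :> nat -> (z %% N)%Z = 0).
  rewrite val_Zp_nat // modn_small => [E|].
    by rewrite -(gez0_abs r0) E.
  by rewrite -(ltz_nat) gez0_abs.
- by move/dvdz_mod0P => ->.
Qed.

Lemma block11 (T : pzRingType) m n : block_mx (1 : 'M[T]_m) 0 0 (1 : 'M_n) = 1.
Proof. exact: (esym (scalar_mx_block m n 1)). Qed.

Section Core.
Variable R : comUnitRingType.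
Variable lft : R -> int.
Hypothesis lftK : forall x, (lft x)%:~R = x.
Hypothesis loc : forall a : R, a \is a GRing.unit \/ (1 - a) \is a GRing.unit.

Local Notation phi M := (map_mx (intr : int -> R) M).

Definition liftm m n (M : 'M[R]_(m, n)) : 'M[int]_(m, n) := map_mx lft M.
Lemma liftmK m n (M : 'M[R]_(m, n)) : phi (liftm M) = M.
Proof. by apply/matrixP => i j; rewrite !mxE lftK. Qed.

Definition d01 n (e : 'rV[int]_n) := forall j, e 0 j = 0 \/ e 0 j = 1.

Definition goodp n (P : 'M[R]_n) :=
  exists (p : 'M[int]_n) (e : 'rV[int]_n),
    [/\ p \in unitmx, d01 e & P *m phi p = phi p *m phi (diag_mx e)].

Lemma step n' (P : 'M[R]_(1 + n')) :
  P *m P = P -> ulsubmx P 0 0 \is a GRing.unit ->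
  (forall Q : 'M[R]_n', Q *m Q = Q -> goodp Q) -> goodp P.
Proof.
move=> PP uU IH.
set u := ulsubmx P 0 0.
pose e0 : 'M[R]_(1 + n', 1) := col_mx 1 0.
pose w := u^-1 *: (P *m e0).
have Pw : P *m w = w by rewrite /w -scalemxAr mulmxA PP.
have uw : usubmx w = 1.
  rewrite /w -{1}(submxK P) /e0 mul_block_col !mulmx0 !mulmx1 !addr0.
  rewrite scale_col_mx col_mxKu (mx11_scalar (ulsubmx P)) -/u scale_scalar_mx mulVr //.
set dw := dsubmx w.
have wE : w = col_mx 1 dw by rewrite -uw vsubmxK.
pose g : 'M[int]_(1 + n') := block_mx 1 0 (liftm dw) 1.
pose gi : 'M[int]_(1 + n') := block_mx 1 0 (- liftm dw) 1.
have ggi : g *m gi = 1.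
  by rewrite mulmx_block !mulmx1 !mul1mx !mulmx0 !mul0mx !addr0 add0r subrr block11.
have gig : gi *m g = 1.
  by rewrite mulmx_block !mulmx1 !mul1mx !mulmx0 !mul0mx !addr0 !add0r addNr block11.
have phig : phi g = block_mx 1 0 dw 1.
  by rewrite map_block_mx !map_mx1 !map_mx0 liftmK.
have phigi : phi gi = block_mx 1 0 (- dw) 1.
  by rewrite map_block_mx !map_mx1 !map_mx0 map_mxN liftmK.
pose P2 := phi gi *m P *m phi g.
have P2e : P2 *m e0 = e0.
  rewrite /P2 -mulmxA phig /e0 mul_block_col !mulmx1 !mulmx0 !addr0 -wE.
  by rewrite -mulmxA Pw wE phigi mul_block_col !mulmx1 !mul1mx !mul0mx !addr0 addNr.
have P2P2 : P2 *m P2 = P2.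
  rewrite /P2 !mulmxA -(mulmxA _ _ (phi gi)) -map_mxM ggi map_mx1 mulmx1.
  by rewrite -(mulmxA _ P P) PP.
have P2E : P2 = block_mx 1 (ursubmx P2) 0 (drsubmx P2).
  move: P2e; rewrite -{1}(submxK P2) /e0 mul_block_col !mulmx1 !mulmx0 !addr0.
  by move/eq_col_mx => [A1 A2]; rewrite -A1 -A2 submxK.
set b := ursubmx P2 in P2E. set d := drsubmx P2 in P2E.
have [bd dd] : b *m d = 0 /\ d *m d = d.
  move: P2P2; rewrite P2E mulmx_block !mulmx1 !mul1mx !mulmx0 !mul0mx !addr0 !add0r.
  case/eq_block_mx => _ H _ ->; split => //.
  by move/(congr1 (fun X => X - b)): H; rewrite addrAC subrr add0r.
pose h : 'M[int]_(1 + n') := block_mx 1 (- liftm b) 0 1.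
pose hi : 'M[int]_(1 + n') := block_mx 1 (liftm b) 0 1.
have hhi : h *m hi = 1.
  by rewrite mulmx_block !mulmx1 !mul1mx !mulmx0 !mul0mx !addr0 add0r subrr block11.
have phih : phi h = block_mx 1 (- b) 0 1.
  by rewrite map_block_mx !map_mx1 !map_mx0 map_mxN liftmK.
have phihi : phi hi = block_mx 1 b 0 1.
  by rewrite map_block_mx !map_mx1 !map_mx0 liftmK.
have P3E : phi hi *m P2 *m phi h = block_mx 1 0 0 d.
  rewrite phihi P2E mulmx_block !mulmx1 !mul1mx !mulmx0 !mul0mx !addr0 !add0r bd addr0.
  by rewrite phih mulmx_block !mulmx1 !mul1mx !mulmx0 !mul0mx !addr0 !add0r addNr.
have [p' [e' [p'U e'01 Hp']]] := IH d dd.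
exists (g *m h *m block_mx 1 0 0 p'), (row_mx 1 e'); split.
- rewrite !unitmx_mul (mulmx1_unit ggi).1 (mulmx1_unit hhi).1 /=.
  by rewrite unitmxE det_ublock det1 mul1r -unitmxE.
- move=> j; rewrite mxE; case: splitP => k _.
    by right; rewrite (ord1 k) mxE.
  exact: e'01.
have e1 : P *m phi g = phi g *m P2.
  by rewrite /P2 !mulmxA -map_mxM ggi map_mx1 mul1mx.
have e2 : P2 *m phi h = phi h *m block_mx 1 0 0 d.
  have hh1 : phi h *m phi hi = 1 by rewrite -map_mxM hhi map_mx1.
  by rewrite -P3E !mulmxA hh1 mul1mx.
clearbody P2.
rewrite diag_mx_row !map_mxM !mulmxA e1 -(mulmxA _ P2) e2 -!mulmxA; congr (_ *m (_ *m _)).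
rewrite !map_block_mx !map_mx1 !map_mx0 !mulmx_block !mulmx1 !mul1mx !mulmx0 !mul0mx !addr0 !add0r Hp'.
congr block_mx; apply/matrixP => i j; rewrite !mxE (ord1 i) (ord1 j) /=.
by rewrite mulr1n.
Qed.

Lemma core n (P : 'M[R]_n) : P *m P = P -> goodp P.
Proof.
elim: n P => [|n' IH] P PP.
  exists 1, 0; split; first exact: unitmx1.
    by move=> j; rewrite mxE; left.
  by rewrite [LHS]flatmx0 [RHS]flatmx0.
have IH' : forall Q : 'M[R]_n', Q *m Q = Q -> goodp Q by move=> Q; exact: IH.
case: (loc (ulsubmx (P : 'M_(1 + n')) 0 0)) => U.
  exact: (step (P := (P : 'M_(1 + n')))).
have PP' : (1 - P) *m (1 - P) = 1 - P.
  by rewrite mulmxBl !mulmxBr !mul1mx mulmx1 PP subrr subr0.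
have U' : ulsubmx ((1 - P : 'M_(1 + n'))) 0 0 \is a GRing.unit.
  by move: U; rewrite !mxE eqxx.
have [p [e [pU e01 H]]] := step PP' U' IH'.
exists p, (const_mx 1 - e); split => //.
  by move=> j; rewrite !mxE; case: (e01 j) => ->; [right|left].
rewrite raddfB /= diag_const_mx map_mxB map_mx1 mulmxBr mulmx1 -H.
by rewrite mulmxBl mul1mx opprB addrC subrK.
Qed.
End Core.

Lemma dvdzNr d x : (d %| - x)%Z = (d %| x)%Z.
Proof. by rewrite /dvdz /in_mem /= abszN. Qed.
Lemma alg4 (V : lmodType int) (I P Q : V) : (I - 2*:P) - (2*:P - (2*2)*:Q) - I = 4 *: (Q - P).
Proof.
rewrite opprB addrAC [I - 2 *: P - I]addrAC subrr add0r addrCA -opprD -scalerDl scalerBr. done.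
Qed.

Section Main.
Variable m : nat.
Let N := (2 ^ m.+1)%N.
Lemma N1 : (1 < N)%N.
Proof. by rewrite /N expnS; have := expn_gt0 2 m; lia. Qed.
Lemma NZ : N%:Z = 2 ^+ m.+1.
Proof. by rewrite /N -natz natrX. Qed.

Local Notation phi M := (map_mx (intr : int -> 'Z_N) M).

Definition lftZ (x : 'Z_N) : int := Posz (nat_of_ord x).
Lemma lftZK x : (lftZ x)%:~R = x.
Proof. exact: natr_Zp. Qed.

Lemma locZ (a : 'Z_N) : a \is a GRing.unit \/ (1 - a) \is a GRing.unit.
Proof.
have U (x : 'Z_N) : x \is a GRing.unit = odd x.
  by rewrite -{1}(natr_Zp x) unitZpE ?N1 // /N coprime_pexpl // coprime2n.
rewrite !U.
have S (x y : 'Z_N) : (((x : nat)%:Z + (y : nat)%:Z - 1)%:~R : 'Z_N) = x + y - 1.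
  by rewrite !intrD !intrN -!pmulrn !natr_Zp.
have : (((a : nat)%:Z + (((1 - a)%R : 'Z_N) : nat)%:Z - 1)%:~R : 'Z_N) == 0.
  by rewrite S addrCA subrr addr0 subrr.
rewrite Zp_intr0 ?N1 // NZ exprS => /(dvdz_trans (dvdz_mulr _ (dvdzz 2))) /dvdzP [q Hq].
move: (1 - a)%R Hq => b Hq.
case Ox: (odd a); first by left.
case Oy: (odd b); first by right.
move: (odd_double_half a) (odd_double_half b); rewrite Ox Oy /= -!muln2; lia.
Qed.

Lemma phi_dvd (z : int) : (N%:Z %| z)%Z -> (z%:~R : 'Z_N) = 0.
Proof. by rewrite -Zp_intr0 ?N1 // => /eqP. Qed.

Lemma congr_phi a b (X Y : 'M[int]_(a, b)) : phi X = phi Y ->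
  exists K, X = Y + N%:Z *: K.
Proof.
move=> H; exists (\matrix_(i, j) ((X i j - Y i j) %/ N%:Z)%Z).
apply/matrixP => i j; rewrite !mxE.
have : ((X i j - Y i j)%:~R : 'Z_N) == 0.
  by rewrite intrB; move/matrixP: H => /(_ i j); rewrite !mxE => ->; rewrite subrr.
rewrite Zp_intr0 ?N1 // => /divzK; rewrite mulrC => ->.
by rewrite addrC subrK.
Qed.


Lemma start n (A : 'M[int]_n) : mx_congr 2 A 1%:M -> mx_congr (2 ^+ m.+3) (A *m A) 1%:M ->
  exists Pz : 'M[int]_n, A = 1%:M - 2 *: Pz /\ phi Pz *m phi Pz = phi Pz.
Proof.
move=> H2 H4.
pose Pz := \matrix_(i, j) ((1%:M i j - A i j) %/ 2)%Z : 'M[int]_n.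
have AE : A = 1%:M - 2 *: Pz.
  apply/matrixP => i j.
  have := H2 i j; move/eqP; rewrite eq_sym eqz_mod_dvd => /divzK E.
  by move: E; rewrite !mxE => E; rewrite mulrC E opprB addrC subrK.
exists Pz; split => //.
have E4 : A *m A - 1%:M = 4 *: (Pz *m Pz - Pz).
  rewrite AE mulmxBl !mulmxBr !mul1mx !mulmx1 -!scalemxAl -!scalemxAr scalerA.
  exact: alg4.
rewrite -map_mxM; apply/matrixP => i j; rewrite !mxE.
apply/eqP; rewrite -subr_eq0 -intrB Zp_intr0 ?N1 // NZ.
have := H4 i j; move/eqP; rewrite eqz_mod_dvd.
have -> : (A *m A) i j - 1%:M i j = (A *m A - 1%:M) i j by rewrite !mxE.
rewrite E4 !mxE !exprS mulrA.
by rewrite dvdz_mul2l.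
Qed.

Lemma finish n (A Pz p : 'M[int]_n) (e : 'rV[int]_n) :
  A = 1%:M - 2 *: Pz -> p \in unitmx -> d01 e ->
  phi Pz *m phi p = phi p *m phi (diag_mx e) ->
  diag_pm1 (1%:M - 2 *: diag_mx e) /\
  mx_congr (2 ^+ m.+2) (invmx p *m A *m p) (1%:M - 2 *: diag_mx e).
Proof.
move=> AE pU e01; rewrite -!map_mxM => /congr_phi [K HK].
have ME : invmx p *m A *m p = (1%:M - 2 *: diag_mx e) - (2 * N%:Z) *: (invmx p *m K).
  rewrite AE mulmxBr mulmx1 -scalemxAr mulmxBl -scalemxAl -mulmxA HK mulmxDr mulmxA.
  rewrite mulVmx // mul1mx -scalemxAr scalerDr scalerA opprD addrA.
  done.
split.
  move=> i j; rewrite !mxE.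
  rewrite eqxx /=; split; last by case: (e01 i) => ->; [left|right].
  by case: (i == j).
move=> i j; rewrite ME; apply/eqP; rewrite eqz_mod_dvd.
rewrite !mxE. set X := (_ - 2 * _). set Y := (2 * N%:Z * _). rewrite addrAC subrr add0r dvdzNr.
by rewrite /Y NZ -exprS; apply: dvdz_mulr.
Qed.

End Main.

Theorem lemma10p2 (k : nat) (hk : (2 <= k)%N) :
  (forall (n : nat) (A : 'M[int]_n),
     A \in unitmx ->
     mx_congr 2 A 1%:M ->
     mx_congr (2 ^+ k.+1) (A *m A) 1%:M ->
     exists (p D : 'M[int]_n),
       [/\ p \in unitmx, diag_pm1 D & mx_congr (2 ^+ k) (invmx p *m A *m p) D])
  /\
  (forall (q r : nat) (A : 'M[int]_(q + r)),
     A \in unitmx ->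
     mx_congr 2 A 1%:M ->
     mx_congr (2 ^+ k.+1) (A *m A) 1%:M ->
     lower_block_id A ->
     exists (p D : 'M[int]_(q + r)),
       [/\ p \in unitmx, lower_block_id p, diag_pm1 D &
           mx_congr (2 ^+ k) (invmx p *m A *m p) D]).
Proof.
case: k hk => [|[|m]] // _.
split.
  move=> n A AU H2 H4.
  have [Pz [AE PP]] := start H2 H4.
  have [p [e [pU e01 H]]] := core (lftZK (m:=m)) (locZ (m:=m)) PP.
  have [D1 D2] := finish AE pU e01 H.
  by exists p, (1%:M - 2 *: diag_mx e).
move=> q r A AU H2 H4 [Aul Aur].
have [Pz [AE PP]] := start H2 H4.
have Pul : ulsubmx Pz = 0.
  move: Aul; rewrite AE -[Pz]submxK [1%:M](scalar_mx_block q r) scale_block_mx opp_block_mx add_block_mx !block_mxKul.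
  move/eqP; rewrite -subr_eq0 addrAC subrr add0r oppr_eq0 scalemx_eq0 => /orP [//|/eqP //].
have Pur : ursubmx Pz = 0.
  move: Aur; rewrite AE -[Pz]submxK [1%:M](scalar_mx_block q r) scale_block_mx opp_block_mx add_block_mx !block_mxKur.
  move/eqP; rewrite sub0r oppr_eq0 scalemx_eq0 => /orP [//|/eqP //].
set X := dlsubmx Pz; set Y := drsubmx Pz.
have PzE : Pz = block_mx 0 0 X Y by rewrite -Pul -Pur submxK.
clearbody X Y.
pose phiN := (map_mx (intr : int -> 'Z_(2 ^ m.+1)%N)).
have [YX YY] : phiN _ _ Y *m phiN _ _ X = phiN _ _ X /\ phiN _ _ Y *m phiN _ _ Y = phiN _ _ Y.
  move: PP; rewrite PzE map_block_mx !map_mx0 mulmx_block !mulmx0 !mul0mx !addr0 !add0r.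
  by case/eq_block_mx.
have [p0 [e0 [p0U e01 H0]]] := core (lftZK (m:=m)) (locZ (m:=m)) YY.
pose p : 'M[int]_(q + r) := block_mx 1 0 (- X) p0.
have pU : p \in unitmx by rewrite unitmxE det_lblock det1 mul1r -unitmxE.
have e01' : d01 (row_mx (0 : 'rV[int]_q) e0).
  by move=> j; rewrite mxE; case: splitP => k _; [rewrite mxE; left|exact: e01].
have H : map_mx (intr : int -> 'Z_(2 ^ m.+1)%N) Pz *m map_mx intr p =
         map_mx intr p *m map_mx intr (diag_mx (row_mx (0 : 'rV[int]_q) e0)).
  rewrite PzE diag_mx_row !map_block_mx !map_mx0 !map_mx1 map_mxN !mulmx_block.
  rewrite !mulmx0 !mul0mx !mulmx1 !mul1mx !addr0 !add0r H0 mulmxN YX subrr.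
  by rewrite linear0 map_mx0 !mulmx0.
have [D1 D2] := finish AE pU e01' H.
exists p, (1%:M - 2 *: diag_mx (row_mx 0 e0)); split => //.
by split; rewrite ?block_mxKul ?block_mxKur.
Qed.
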